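(* Let $V$ be a unitary lowest weight representation of $\hat{G}_{\Lambda,\Lambda_F}$ with lowest weight $h$. Then there exist $\alpha\in\mathbb{R}$ and $N\in\mathbb{N}$ such that $h_I(\lambda_1;I;\lambda_2)=\alpha$ for all $\lambda_1,\lambda_2\in\{1,\dots,\Lambda_F\}$ and all sequences $I$ with $\#(I)\ge N$.
   Context: Fix positive integers $\Lambda,\Lambda_F$. A sequence $\dot I=i_1\cdots i_a$ is a finite, possibly empty, sequence of integers in $\{1,\dots,\Lambda\}$; $\#(\dot I)=a$, juxtaposition denotes concatenation, and $\delta^{\dot I}_{\dot J}$ is $1$ if $\dot I=\dot J$ and $0$ otherwise (similarly for integers). Let $\mathcal{T}_o$ be the complex vector space with basis the symbols $\bar\phi^{\lambda_1}\otimes s^{\dot K}\otimes\phi^{\lambda_2}$, $1\le\lambda_1,\lambda_2\le\Lambda_F$, $\dot K$ any sequence. For all sequences $\dot I,\dot J$ and all $\lambda_i\in\{1,\dots,\Lambda_F\}$ define linear operators on $\mathcal{T}_o$: first kind: $\bar\Xi^{\lambda_1}_{\lambda_2}\otimes f^{\dot I}_{\dot J}\otimes\Xi^{\lambda_3}_{\lambda_4}(\bar\phi^{\lambda_5}\otimes s^{\dot K}\otimes\phi^{\lambda_6})=\delta^{\lambda_5}_{\lambda_2}\delta^{\dot K}_{\dot J}\delta^{\lambda_6}_{\lambda_4}\,\bar\phi^{\lambda_1}\otimes s^{\dot I}\otimes\phi^{\lambda_3}$; second kind: $\bar\Xi^{\lambda_1}_{\lambda_2}\otimes l^{\dot I}_{\dot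 J}(\bar\phi^{\lambda_3}\otimes s^{\dot K}\otimes\phi^{\lambda_4})=\delta^{\lambda_3}_{\lambda_2}\sum_{\dot K_1\dot K_2=\dot K}\delta^{\dot K_1}_{\dot J}\,\bar\phi^{\lambda_1}\otimes s^{\dot I\dot K_2}\otimes\phi^{\lambda_4}$; third kind: $r^{\dot I}_{\dot J}\otimes\Xi^{\lambda_1}_{\lambda_2}(\bar\phi^{\lambda_3}\otimes s^{\dot K}\otimes\phi^{\lambda_4})=\delta^{\lambda_4}_{\lambda_2}\sum_{\dot K_1\dot K_2=\dot K}\delta^{\dot K_2}_{\dot J}\,\bar\phi^{\lambda_3}\otimes s^{\dot K_1\dot I}\otimes\phi^{\lambda_1}$; fourth kind: $\sigma^{\dot I}_{\dot J}(\bar\phi^{\lambda_1}\otimes s^{\dot K}\otimes\phi^{\lambda_2})=\sum_{\dot K_1\dot K_2\dot K_3=\dot K}\delta^{\dot K_2}_{\dot J}\,\bar\phi^{\lambda_1}\otimes s^{\dot K_1\dot I\dot K_3}\otimes\phi^{\lambda_2}$; sums over all ways to write $\dot K$ as a concatenation of possibly empty sequences. The open string algebra $\hat{G}_{\Lambda,\Lambda_F}$ is the Lie algebra (commutator bracket) of operators on $\mathcal{T}_o$ spanned by these operators. Ordering: for finite sequences of positive integers $a=a_1\cdots a_m$, $b=b_1\cdots b_n$, $a>b$ means $m>n$, or $m=n\ne0$ and $a_r>b_r$ at the first index $r$ where they differ (applied to concatenations like $\dot I\lambda_1\lambda_3$). $G^{00}$ is the span of all $\bar\Xi^{\lambda_1}_{\lambda_1}\otimes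 f^{\dot I}_{\dot I}\otimes\Xi^{\lambda_2}_{\lambda_2}$, $\bar\Xi^{\lambda}_{\lambda}\otimes l^{\dot I}_{\dot I}$, $r^{\dot I}_{\dot I}\otimes\Xi^{\lambda}_{\lambda}$, $\sigma^{\dot I}_{\dot I}$. $G^-$ is the span of all operators of the four kinds with $\#(\dot I)<\#(\dot J)$, together with those with $\#(\dot I)=\#(\dot J)$ and $\dot J\lambda_2\lambda_4>\dot I\lambda_1\lambda_3$ (first kind), $\dot J\lambda_2>\dot I\lambda_1$ (second and third kind), $\dot J>\dot I$ (fourth kind). $\omega$ is the antilinear anti-involution swapping upper and lower indices: $\omega(\bar\Xi^{\lambda_1}_{\lambda_2}\otimes f^{\dot I}_{\dot J}\otimes\Xi^{\lambda_3}_{\lambda_4})=\bar\Xi^{\lambda_2}_{\lambda_1}\otimes f^{\dot J}_{\dot I}\otimes\Xi^{\lambda_4}_{\lambda_3}$, $\omega(\bar\Xi^{\lambda_1}_{\lambda_2}\otimes l^{\dot I}_{\dot J})=\bar\Xi^{\lambda_2}_{\lambda_1}\otimes l^{\dot J}_{\dot I}$, $\omega(r^{\dot I}_{\dot J}\otimes\Xi^{\lambda_1}_{\lambda_2})=r^{\dot J}_{\dot I}\otimes\Xi^{\lambda_2}_{\lambda_1}$, $\omega(\sigma^{\dot I}_{\dot J})=\sigma^{\dot J}_{\dot I}$. A lowest weight $h$ is a linear functional on $G^{00}$ real on the spanning operators; $h_I(\lambda_1;\dot I;\lambda_2)$ denotes its value on $\bar\Xi^{\lambda_1}_{\lambda_1}\otimes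 f^{\dot I}_{\dot I}\otimes\Xi^{\lambda_2}_{\lambda_2}$. A unitary lowest weight representation with lowest weight $h$ is a representation $V$ generated by a vector $v\ne0$ with $G^-v=0$ and $Hv=h(H)v$ for $H\in G^{00}$, carrying a positive definite Hermitian form with $\langle Xu,w\rangle=\langle u,\omega(X)w\rangle$ for all $X$. *)

(* Defs.v *)
(* Complex scalars are R[i] for an arbitrary realType R
   (every realType is isomorphic to the real numbers). *)
From mathcomp Require Import all_boot all_order all_algebra.
From mathcomp Require Import reals.
From mathcomp.real_closed Require Export complex.
Set Implicit Arguments.
Unset Strict Implicit.
Unset Printing Implicit Defensive.
Import GRing.Theory Num.Theory.
Local Open Scope ring_scope.

Section OpenString.
Variables (L LF : nat).
(* Letters i in {1..L} are encoded as 'I_L (value i-1);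
   flavours lambda in {1..LF} as 'I_LF (value lambda-1). *)
Definition word := seq 'I_L.

(* Labels of the spanning operators of the open string algebra.
   GF a b I J c d = bar Xi^a_b (x) f^I_J (x) Xi^c_d
   GL a b I J     = bar Xi^a_b (x) l^I_J
   GR I J a b     = r^I_J (x) Xi^a_b
   GS I J         = sigma^I_J                                        *)
Inductive gen : Type :=
| GF of 'I_LF & 'I_LF & word & word & 'I_LF & 'I_LF
| GL of 'I_LF & 'I_LF & word & word
| GR of word & word & 'I_LF & 'I_LF
| GS of word & word.

(* basis vectors  bar phi^l1 (x) s^K (x) phi^l2  of T_o *)
Definition basis := ('I_LF * word * 'I_LF)%type.

Variable C : numClosedFieldType.

(* elements of T_o as finite formal sums of basis vectors *)
Definition fvec := seq (C * basis).
Definition coef (v : fvec) (b : basis) : C :=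
  \sum_(p <- v) (if p.2 == b then p.1 else 0).
Definition scalev (c : C) (v : fvec) : fvec := [seq (c * q.1, q.2) | q <- v].

Definition splits2 (K : word) : seq (word * word) :=
  [seq (take n K, drop n K) | n <- iota 0 (size K).+1].
Definition splits3 (K : word) : seq (word * word * word) :=
  flatten [seq [seq (take n K, take (m - n) (drop n K), drop m K)
               | m <- iota n ((size K).+1 - n)] | n <- iota 0 (size K).+1].

Definition op (g : gen) (x : basis) : fvec :=
  let: (l1, K, l2) := x in
  match g with
  | GF a b Iw Jw c d =>
      if [&& l1 == b, K == Jw & l2 == d] then [:: (1, (a, Iw, c))] else [::]
  | GL a b Iw Jw =>
      if l1 == b then
        [seq (1, (a, Iw ++ s.2, l2)) | s <- splits2 K & s.1 == Jw] else [::]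
  | GR Iw Jw a b =>
      if l2 == b then
        [seq (1, (l1, s.1 ++ Iw, a)) | s <- splits2 K & s.2 == Jw] else [::]
  | GS Iw Jw =>
      [seq (1, (l1, t.1.1 ++ Iw ++ t.2, l2)) | t <- splits3 K & t.1.2 == Jw]
  end.

(* linear operators on T_o, given by their values on the basis *)
Definition applyv (f : basis -> fvec) (v : fvec) : fvec :=
  flatten [seq scalev q.1 (f q.2) | q <- v].
Definition op_eq (f g : basis -> fvec) : Prop :=
  forall x y, coef (f x) y = coef (g x) y.

(* elements of hat G: finite linear combinations of spanning operators *)
Definition comb := seq (C * gen).
Definition act (X : comb) : basis -> fvec :=
  fun x => flatten [seq scalev p.1 (op p.2 x) | p <- X].
Definition op_comm (f g : basis -> fvec) : basis -> fvec :=
  fun x => applyv f (g x) ++ scalev (-1) (applyv g (f x)).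

Definition omega_gen (g : gen) : gen :=
  match g with
  | GF a b Iw Jw c d => GF b a Jw Iw d c
  | GL a b Iw Jw => GL b a Jw Iw
  | GR Iw Jw a b => GR Jw Iw b a
  | GS Iw Jw => GS Jw Iw
  end.
Definition omega (X : comb) : comb := [seq (p.1^*, omega_gen p.2) | p <- X].

Fixpoint lex_gt (a b : seq nat) : bool :=
  match a, b with
  | x :: a', y :: b' => if x == y then lex_gt a' b' else (y < x)%N
  | _, _ => false
  end.
Definition seq_gt (a b : seq nat) : bool :=
  (size b < size a)%N || [&& size a == size b, size a != 0%N & lex_gt a b].
(* back to the integer values 1..L, 1..LF *)
Definition encw (I : word) : seq nat := [seq (val i).+1 | i <- I].
Definition encf (l : 'I_LF) : nat := (val l).+1.

Definition in_Gminus (g : gen) : bool :=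
  match g with
  | GF a b Iw Jw c d => (size Iw < size Jw)%N ||
      ((size Iw == size Jw) && seq_gt (encw Jw ++ [:: encf b; encf d])
                                     (encw Iw ++ [:: encf a; encf c]))
  | GL a b Iw Jw => (size Iw < size Jw)%N ||
      ((size Iw == size Jw) && seq_gt (encw Jw ++ [:: encf b]) (encw Iw ++ [:: encf a]))
  | GR Iw Jw a b => (size Iw < size Jw)%N ||
      ((size Iw == size Jw) && seq_gt (encw Jw ++ [:: encf b]) (encw Iw ++ [:: encf a]))
  | GS Iw Jw => (size Iw < size Jw)%N || ((size Iw == size Jw) && seq_gt (encw Jw) (encw Iw))
  end.

Definition in_G00 (g : gen) : bool :=
  match g with
  | GF a b Iw Jw c d => [&& a == b, Iw == Jw & c == d]
  | GL a b Iw Jw => (a == b) && (Iw == Jw)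
  | GR Iw Jw a b => (Iw == Jw) && (a == b)
  | GS Iw Jw => Iw == Jw
  end.

Section Rep.
Variable V : lmodType C.
Variable rho : gen -> V -> V.

Definition rhohat (X : comb) (u : V) : V := \sum_(p <- X) p.1 *: rho p.2 u.

(* rho extends to a well-defined Lie algebra homomorphism
   hat G -> End(V) (commutator bracket on both sides) *)
Definition is_rep : Prop :=
  (forall g c u w, rho g (c *: u + w) = c *: rho g u + rho g w) /\
  (forall X, op_eq (act X) (fun _ => [::]) -> forall u, rhohat X u = 0) /\
  (forall X Y Z, op_eq (act Z) (op_comm (act X) (act Y)) ->
     forall u, rhohat Z u = rhohat X (rhohat Y u) - rhohat Y (rhohat X u)).

(* lowest weight: a linear functional on G^00 (given by its values on the
   spanning operators of G^00), real on those spanning operators *)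
Definition hhat (h : gen -> C) (X : comb) : C := \sum_(p <- X) p.1 * h p.2.
Definition lowest_weight (h : gen -> C) : Prop :=
  (forall g, in_G00 g -> h g \is Num.real) /\
  (forall X, all (fun p => in_G00 p.2) X ->
     op_eq (act X) (fun _ => [::]) -> hhat h X = 0).

Definition lowest_weight_rep (h : gen -> C) (v : V) : Prop :=
  [/\ v <> 0,
      (forall w, exists ws : seq (C * seq gen),
          w = \sum_(p <- ws) p.1 *: foldr rho v p.2),
      (forall X, all (fun p => in_Gminus p.2) X -> rhohat X v = 0) &
      (forall X, all (fun p => in_G00 p.2) X -> rhohat X v = hhat h X *: v)].

Definition unitary_form (form : V -> V -> C) : Prop :=
  [/\ (forall c x y w, form (c *: x + y) w = c^* * form x w + form y w),
      (forall u x y c, form u (c *: x + y) = c * form u x + form u y),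
      (forall u w, form u w = (form w u)^*),
      (forall u, u <> 0 -> 0 < form u u) &
      (forall X u w, form (rhohat X u) w = form u (rhohat (omega X) w))].
End Rep.
End OpenString.

(* Main.v *)
Require Import Defs.
From mathcomp Require Import all_boot all_order all_algebra.
From mathcomp Require Import reals.
From mathcomp.real_closed Require Import complex.
From mathcomp Require Import ring lra zify.
From Stdlib Require Import Classical.
Import GRing.Theory Num.Theory.
Local Open Scope ring_scope.

Section Lists.
Variables (L LF : nat) (C : numClosedFieldType).
Local Notation basis := (basis L LF).
Local Notation gen := (gen L LF).

Lemma coef_nil (y : basis) : coef ([::] : fvec L LF C) y = 0.
Proof. by rewrite /coef big_nil. Qed.

Lemma coef_cons c (b y : basis) (w : fvec L LF C) :
  coef ((c, b) :: w) y = (if b == y then c else 0) + coef w y.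
Proof. by rewrite /coef big_cons. Qed.

Lemma coef_cat (w1 w2 : fvec L LF C) y : coef (w1 ++ w2) y = coef w1 y + coef w2 y.
Proof. by rewrite /coef big_cat. Qed.

Lemma coef_scalev c (w : fvec L LF C) y : coef (scalev c w) y = c * coef w y.
Proof.
rewrite /coef /scalev big_map big_distrr /=; apply: eq_bigr => p _.
by case: ifP; rewrite ?mulr0.
Qed.

Lemma coef_flatten (s : seq (fvec L LF C)) y :
  coef (flatten s) y = \sum_(w <- s) coef w y.
Proof.
elim: s => [|w s IH]; first by rewrite big_nil coef_nil.
by rewrite /= coef_cat IH big_cons.
Qed.

Lemma coef_act (X : comb L LF C) x y :
  coef (act X x) y = \sum_(p <- X) p.1 * coef (op C p.2 x) y.
Proof.
by rewrite /act coef_flatten big_map; apply: eq_bigr => p _; rewrite coef_scalev.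
Qed.

Lemma coef_applyv f (w : fvec L LF C) y :
  coef (applyv f w) y = \sum_(q <- w) q.1 * coef (f q.2) y.
Proof.
by rewrite /applyv coef_flatten big_map; apply: eq_bigr => p _; rewrite coef_scalev.
Qed.

Lemma act1 c (g : gen) (x : basis) : act [:: (c, g)] x = scalev c (op C g x).
Proof. by rewrite /act /= cats0. Qed.

Lemma op_GF a b I J c d (z : basis) :
  op C (GF a b I J c d) z = if z == (b, J, d) then [:: (1, (a, I, c))] else [::].
Proof. by case: z => [[l1 K] l2] /=; rewrite !xpair_eqE andbA. Qed.

Lemma filter_take (K J : word L) :
  [seq n <- iota 0 (size K).+1 | take n K == J] =
  if take (size J) K == J then [:: size J] else [::].
Proof.
have E : {in iota 0 (size K).+1, (fun n => take n K == J) =1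
           (fun n => (n == size J) && (take (size J) K == J))}.
  move=> n; rewrite mem_iota add0n ltnS => /= Hn.
  case: (eqVneq n (size J)) => [->|Hne] //=.
  apply/eqP => HJ; move/eqP: Hne; apply; rewrite -HJ size_take_min.
  by apply/esym/minn_idPl.
rewrite (eq_in_filter E).
case: ifP => H.
  2: { transitivity (filter pred0 (iota 0 (size K).+1)).
       by apply: eq_filter => n /=; rewrite andbF. exact: filter_pred0. }
rewrite (@eq_filter _ _ (pred1 (size J))); last by move=> n /=; rewrite andbT.
have HJ : (size J <= size K)%N by rewrite -(eqP H) size_take_min geq_minr.
by rewrite filter_pred1_uniq ?iota_uniq // mem_iota add0n ltnS HJ leq0n.
Qed.
End Lists.
Section Lists2.
Variables (L LF : nat) (C : numClosedFieldType).
Local Notation basis := (basis L LF).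

Lemma op_GL a b (I J : word L) (l1 : 'I_LF) K l2 :
  op C (GL a b I J) (l1, K, l2) =
  if (l1 == b) && (take (size J) K == J) then [:: (1, (a, I ++ drop (size J) K, l2))]
  else [::].
Proof.
change (op C (GL a b I J) (l1,K,l2)) with (if l1 == b then
  [seq ((1 : C), (a, I ++ s.2, l2)) | s <- splits2 K & s.1 == J] else [::]).
case: (l1 == b) => //.
have -> : [seq s <- splits2 K | s.1 == J] =
  [seq (take n K, drop n K) | n <- [seq n <- iota 0 (size K).+1 | take n K == J]].
  by rewrite /splits2 filter_map.
by rewrite filter_take; case: ifP => H //=; rewrite (eqP H).
Qed.
End Lists2.

Lemma scalev_nil L LF (C : numClosedFieldType) (c : C) : scalev c ([::] : fvec L LF C) = [::].
Proof. by []. Qed.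
Lemma scalev_cons L LF (C : numClosedFieldType) (c d : C) b (w : fvec L LF C) :
  scalev c ((d, b) :: w) = (c * d, b) :: scalev c w.
Proof. by []. Qed.

Lemma act_cons L LF (C : numClosedFieldType) (c : C) (g : gen L LF) X x :
  act ((c, g) :: X) x = scalev c (op C g x) ++ act X x.
Proof. by []. Qed.
Lemma act_nil L LF (C : numClosedFieldType) x : act ([::] : comb L LF C) x = [::].
Proof. by []. Qed.

Ltac simp := rewrite ?cat_cons ?cat0s ?act_cons ?act_nil ?big_cat ?big_cons ?big_nil ?act1 ?op_GF ?coef_scalev ?coef_cons ?coef_nil ?eqxx ?scalev_nil ?scalev_cons.

Section Comm.
Variables (L LF : nat) (C : numClosedFieldType).
Local Notation basis := (basis L LF).

Lemma commF a b (I J : word L) c d :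
  (a, I, c) != (b, J, d) :> basis ->
  op_eq (act ([:: (1, GF b b J J d d); (-1, GF a a I I c c)] : comb L LF C))
    (op_comm (act [:: (1, GF b a J I d c)]) (act [:: (1, GF a b I J c d)])).
Proof.
move=> nxy z w.
have nyx : ((b, J, d) == (a, I, c) :> basis) = false by rewrite eq_sym; apply/negbTE.
rewrite /op_comm coef_cat coef_scalev !coef_applyv coef_act !act1 !op_GF.
case: (eqVneq z (b,J,d)) => [->|nzy]; last (case: (eqVneq z (a,I,c)) => [->|nzx]);
  do 4 (simp; rewrite ?nyx ?(negbTE nxy) ?(negbTE nzy) ?(negbTE nzx)).
all: rewrite /=; (try case: ((b,J,d) == w)); (try case: ((a,I,c) == w)); ring.
Qed.

Lemma commF2 a b (I J : word L) c d :
  (a, I, c) != (b, J, d) :> basis ->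
  op_eq (act [:: (-2, GF a b I J c d)])
    (op_comm (act ([:: (1, GF b b J J d d); (-1, GF a a I I c c)] : comb L LF C))
             (act [:: (1, GF a b I J c d)])).
Proof.
move=> nxy z w.
have nyx : ((b, J, d) == (a, I, c) :> basis) = false by rewrite eq_sym; apply/negbTE.
rewrite /op_comm coef_cat coef_scalev !coef_applyv coef_act.
case: (eqVneq z (b,J,d)) => [->|nzy]; last (case: (eqVneq z (a,I,c)) => [->|nzx]);
  do 5 (simp; rewrite ?coef_act ?nyx ?(negbTE nxy) ?(negbTE nzy) ?(negbTE nzx)).
all: rewrite /=; (try case: ((b,J,d) == w)); (try case: ((a,I,c) == w)); ring.
Qed.
Lemma commG (l : 'I_LF) (I : word L) (i : 'I_L) :
  op_eq (act ([:: (1, GL l l I I); (-1, GL l l (rcons I i) (rcons I i))] : comb L LF C))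
    (op_comm (act [:: (1, GL l l I (rcons I i))]) (act [:: (1, GL l l (rcons I i) I)])).
Proof.
move=> [[l1 K] l2] w.
rewrite /op_comm coef_cat coef_scalev !coef_applyv coef_act.
case H1: (take (size I) K == I); case H2: (take (size (rcons I i)) K == rcons I i);
simp; rewrite !op_GL ?H1 ?H2 ?andbT ?andbF; case: (l1 == l);
  do 3 (simp; rewrite ?op_GL ?H1 ?H2 /=; simp;
        rewrite ?take_size_cat ?drop_size_cat ?eqxx //=).
all: try (have e1 : I ++ drop (size I) K = K by rewrite -{1}(eqP H1) cat_take_drop).
all: try (have e2 : rcons I i ++ drop (size (rcons I i)) K = K by rewrite -{1}(eqP H2) cat_take_drop).
all: rewrite ?e1 ?e2.
all: try ring.
Qed.
End Comm.

Lemma sum_enum_one (C : numClosedFieldType) n (F : 'I_n -> C) c0 :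
  (forall c, c != c0 -> F c = 0) -> \sum_(c <- enum 'I_n) F c = F c0.
Proof.
move=> H; rewrite big_enum /= (bigD1 c0) //= big1 ?addr0 // => c Hc; exact: H.
Qed.

Lemma sum_enum_zero (C : numClosedFieldType) n (F : 'I_n -> C) :
  (forall c, F c = 0) -> \sum_(c <- enum 'I_n) F c = 0.
Proof. by move=> H; rewrite big1_seq // => c _; exact: H. Qed.

Lemma sum_seq_one (C : numClosedFieldType) (T : eqType) (s : seq T) (F : T -> C) c0 :
  uniq s -> c0 \in s -> (forall c, c != c0 -> F c = 0) -> \sum_(c <- s) F c = F c0.
Proof.
move=> Us Hc H; rewrite (bigD1_seq c0) //= big1 ?addr0 // => c Hc'; exact: H.
Qed.

Section Rel.
Variables (L LF : nat) (C : numClosedFieldType).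
Local Notation basis := (basis L LF).

Definition relcomb (l : 'I_LF) (I : word L) : comb L LF C :=
  (1, GL l l I I) :: [seq (-1, GF l l I I c c) | c <- enum 'I_LF] ++
     [seq (-1, GL l l (rcons I i) (rcons I i)) | i <- enum 'I_L].

Lemma relG (l : 'I_LF) (I : word L) :
  op_eq (act (relcomb l I)) (fun _ => [::]).
Proof.
move=> [[l1 K] l2] w.
rewrite coef_act coef_nil /relcomb big_cons big_cat !big_map; cbn [fst snd]; rewrite op_GL.
under eq_bigr => j _ do rewrite op_GF.
under [X in _ + (_ + X)]eq_bigr => j _ do rewrite op_GL size_rcons.
have cz : forall (b : bool) (t : basis), coef (if b then [:: ((1:C), t)] else [::]) w =
   if b then coef [:: ((1:C), t)] w else 0.
  by move=> [] t //; rewrite coef_nil.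
under eq_bigr => j _ do rewrite cz.
under [X in _ + (_ + X)]eq_bigr => j _ do rewrite cz.
rewrite cz.
case: (eqVneq l1 l) => [->|nl]; last first.
  rewrite /= mulr0 add0r big1_seq ?add0r; last first.
    by move=> c _; rewrite !xpair_eqE (negbTE nl) /= mulr0.
  by rewrite big1_seq // => c _; rewrite mulr0.
rewrite /=.
set n := size I.
case: (eqVneq K I) => [->|nKI].
  rewrite take_size drop_size cats0 eqxx.
  rewrite (@sum_seq_one _ _ _ _ l2); first last.
  - by move=> c nc; rewrite !xpair_eqE !eqxx /= eq_sym (negbTE nc) mulr0.
  - exact: mem_index_enum.
  - exact: index_enum_uniq.
  rewrite eqxx big1_seq ?addr0; first by ring.
  move=> c _; rewrite take_oversize ?size_rcons ?leqnSn //.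
  have -> : (I == rcons I c) = false.
    by apply/negbTE/eqP => /(congr1 size); rewrite size_rcons => /n_Sn.
  by rewrite mulr0.
have z2 : \sum_(j <- index_enum 'I_LF)
    -1 * (if (l, K, l2) == (l, I, j) then coef [:: ((1:C), (l, I, j))] w else 0) = 0.
  by rewrite big1_seq // => c _; rewrite !xpair_eqE (negbTE nKI) andbF mulr0.
rewrite z2 add0r.
case: (boolP (take n K == I)) => HK; last first.
  rewrite mulr0 add0r big1_seq // => c _.
  case: ifP => [/eqP Hc|]; last by rewrite mulr0.
  exfalso; move/negP: HK; apply.
  by rewrite -(take_takel K (leqnSn n)) Hc -cats1 take_size_cat.
have HnK : (n < size K)%N.
  rewrite ltnNge; apply/negP => Hle; move: HK; rewrite take_oversize //.
  by rewrite (negbTE nKI).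
have [k0 _] : {k0 : 'I_L | true} by by case: K {nKI HK z2} HnK => [|k0 ?] //; exists k0.
have e1 : I ++ drop n K = K by rewrite -{1}(eqP HK) cat_take_drop.
rewrite e1 (@sum_seq_one _ _ _ _ (nth k0 K n)); first last.
- move=> c nc; rewrite (take_nth k0 HnK) eqseq_rcons HK /= eq_sym (negbTE nc).
  by rewrite mulr0.
- exact: mem_index_enum.
- exact: index_enum_uniq.
rewrite (take_nth k0 HnK) eqseq_rcons HK eqxx /=.
rewrite -(eqP HK) -(take_nth k0 HnK) cat_take_drop; ring.
Qed.
End Rel.

Import Order.TTheory.
Import Order.TTheory GRing.Theory Num.Theory.

Section Rep.
Variables (L LF : nat) (C : numClosedFieldType) (V : lmodType C).
Variables (rho : gen L LF -> V -> V) (h : gen L LF -> C) (v : V) (form : V -> V -> C).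
Hypotheses (Hrep : is_rep rho) (Hlwr : lowest_weight_rep rho h v)
  (Hform : unitary_form rho form).

Lemma rho_lin g c u w : rho g (c *: u + w) = c *: rho g u + rho g w.
Proof. by case: Hrep => H _; apply: H. Qed.

Lemma rho0 g : rho g 0 = 0.
Proof.
by have := rho_lin g (-1) 0 0; rewrite scaler0 add0r scaleN1r addNr.
Qed.

Lemma rhoZ g c u : rho g (c *: u) = c *: rho g u.
Proof. by have := rho_lin g c u 0; rewrite !addr0 rho0 addr0. Qed.

Lemma rhoD g u w : rho g (u + w) = rho g u + rho g w.
Proof. by have := rho_lin g 1 u w; rewrite !scale1r. Qed.

Lemma rhohat1 c g u : rhohat rho [:: (c, g)] u = c *: rho g u.
Proof. by rewrite /rhohat big_cons big_nil addr0. Qed.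

Lemma rho_comm Z g1 g2 u :
  op_eq (act Z) (op_comm (act [:: (1, g1)]) (act [:: (1, g2)])) ->
  rhohat rho Z u = rho g1 (rho g2 u) - rho g2 (rho g1 u).
Proof.
case: Hrep => _ [_ H3] HZ; by rewrite (H3 _ _ _ HZ u) !rhohat1 !scale1r.
Qed.

Lemma rho_comm_gen Z X g u :
  op_eq (act Z) (op_comm (act X) (act [:: (1, g)])) ->
  rhohat rho Z u = rhohat rho X (rho g u) - rho g (rhohat rho X u).
Proof.
case: Hrep => _ [_ H3] HZ; by rewrite (H3 _ _ _ HZ u) !rhohat1 !scale1r.
Qed.

Lemma minus_v g : in_Gminus g -> rho g v = 0.
Proof.
case: Hlwr => _ _ H _ Hg; have := H [:: (1, g)]; rewrite rhohat1 scale1r; apply.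
by rewrite /= Hg.
Qed.

Lemma g00_v Z : all (fun p => in_G00 p.2) Z -> rhohat rho Z v = hhat h Z *: v.
Proof. by case: Hlwr => _ _ _ H; apply: H. Qed.

Lemma adj g u w : form (rho g u) w = form u (rho (omega_gen g) w).
Proof.
case: Hform => _ _ _ _ H; have := H [:: (1, g)] u w.
have -> : omega [:: (1, g)] = [:: (1^*, omega_gen g)] by [].
by rewrite !rhohat1 conjC1 !scale1r.
Qed.

Lemma formr0 u : form u 0 = 0.
Proof.
case: Hform => _ H _ _ _; have := H u 0 0 (-1).
by rewrite scaler0 add0r mulN1r addNr.
Qed.

Lemma formZr u c w : form u (c *: w) = c * form u w.
Proof. case: Hform => _ H _ _ _; by have := H u w 0 c; rewrite !addr0 formr0 addr0. Qed.

Lemma formDr u w1 w2 : form u (w1 + w2) = form u w1 + form u w2.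
Proof. case: Hform => _ H _ _ _; by have := H u w1 w2 1; rewrite scale1r mul1r. Qed.

Lemma form0l w : form 0 w = 0.
Proof.
case: Hform => H _ _ _ _; have := H (-1) 0 0 w.
by rewrite scaler0 add0r rmorphN1 mulN1r addNr.
Qed.

Lemma form_ge0 u : 0 <= form u u.
Proof.
case: Hform => _ _ _ H _; case: (eqVneq u 0) => [->|nu]; first by rewrite form0l.
by apply/ltW/H/eqP.
Qed.

Lemma form_v : 0 < form v v.
Proof. by case: Hform => _ _ _ H _; case: Hlwr => Hv _ _ _; apply: H. Qed.

Lemma pos_lemma g Z : in_Gminus (omega_gen g) -> all (fun p => in_G00 p.2) Z ->
  op_eq (act Z) (op_comm (act [:: (1, omega_gen g)]) (act [:: (1, g)])) ->
  0 <= hhat h Z.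
Proof.
move=> Hm HZ HC.
have E := rho_comm _ _ _ v HC.
rewrite (minus_v (omega_gen g) Hm) rho0 subr0 g00_v // in E.
have := form_ge0 (rho g v); rewrite adj -E formZr.
by rewrite pmulr_lge0 // form_v.
Qed.

Section SL2.
Variables (gE gF : gen L LF) (Zh : comb L LF C).
Hypotheses (HEF : omega_gen gE = gF) (HFm : in_Gminus gF)
  (HZ : all (fun p => in_G00 p.2) Zh)
  (HC1 : op_eq (act Zh) (op_comm (act [:: (1, gF)]) (act [:: (1, gE)])))
  (HC2 : op_eq (act [:: (-2, gE)]) (op_comm (act Zh) (act [:: (1, gE)]))).

Local Notation mu := (hhat h Zh).
Local Notation w k := (iter k (rho gE) v).

Lemma sl2_H k : rhohat rho Zh (w k) = (mu - 2 * k%:R) *: w k.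
Proof.
elim: k => [|k IH]; first by rewrite /= g00_v // mulr0 subr0.
have E := rho_comm_gen _ _ _ (w k) HC2.
rewrite rhohat1 IH rhoZ in E.
move/eqP: E; rewrite eq_sym subr_eq => /eqP E.
rewrite /= E -scalerDl; congr (_ *: _).
rewrite -addn1 natrD; ring.
Qed.

Lemma sl2_F k : rho gF (w k.+1) = (k.+1%:R * (mu - k%:R)) *: w k.
Proof.
have EF u : rho gF (rho gE u) = rhohat rho Zh u + rho gE (rho gF u).
  by rewrite (rho_comm _ _ _ u HC1) subrK.
elim: k => [|k IH].
  by rewrite /= EF minus_v // rho0 addr0 g00_v // mul1r subr0.
rewrite [w k.+2]/= EF IH rhoZ (sl2_H k.+1) -scalerDl.
congr (_ *: _); rewrite -(addn2 k) -(addn1 k) !natrD; ring.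
Qed.

Lemma sl2_N k : form (w k.+1) (w k.+1) = (k.+1%:R * (mu - k%:R)) * form (w k) (w k).
Proof. by rewrite [X in form X _]/= adj HEF sl2_F formZr. Qed.

Lemma sl2_main : mu \is Num.real -> forall k,
  (exists n : nat, mu = n%:R) \/
  (0 < form (w k) (w k) /\ k%:R <= mu + 1).
Proof.
move=> Hr.
have mu_ge0 : 0 <= mu.
  have := form_ge0 (w 1); rewrite sl2_N /= mul1r subr0 pmulr_lge0 //; exact: form_v.
elim=> [|k [IH|[Np Hk]]]; first by right; split; [exact: form_v | rewrite ler_wpDl].
- by left.
have N1 := form_ge0 (w k.+1); rewrite sl2_N in N1.
have Hr' : mu - k%:R \is Num.real by rewrite rpredB // realn.
case: (real_ltgt0P Hr') => Hs.
- right; split; first by rewrite sl2_N pmulr_lgt0 // pmulr_rgt0 ?ltr0Sn.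
  by rewrite -addn1 natrD lerD2r ltW // -subr_gt0.
- exfalso; move: N1; rewrite pmulr_lge0 // pmulr_rge0 ?ltr0Sn //.
  by rewrite (lt_geF Hs).
- left; exists k; apply/eqP; rewrite -subr_eq0; apply/eqP.
  move: Hs; rewrite /=; try by move=> ->.
Qed.
End SL2.
End Rep.

Local Open Scope complex_scope.
Local Notation Re := complex.Re.

Lemma nat_max (P : nat -> Prop) M : (exists k, P k) -> (forall k, P k -> (k <= M)%N) ->
  exists k, P k /\ forall j, P j -> (j <= k)%N.
Proof.
move=> [k Pk] HM.
suff H : forall d k, P k -> (M - k <= d)%N -> exists k, P k /\ forall j, P j -> (j <= k)%N.
  exact: (H (M - k)%N k Pk).
elim=> [|d IH] k' Pk' Hd.
  exists k'; split=> // j Pj; have := HM j Pj; have := HM k' Pk'; lia.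
case: (classic (exists j, P j /\ (k' < j)%N)) => [[j [Pj Hj]]|Hno].
  by apply: (IH j Pj); have := HM j Pj; lia.
exists k'; split=> // j Pj; rewrite leqNgt; apply/negP => Hlt; apply: Hno; exists j; by [].
Qed.

Lemma Re_nat (R : realType) (n : nat) : Re (n%:R : R[i]) = n%:R.
Proof. by rewrite -(rmorph_nat (real_complex R) n). Qed.

Section ReLemmas.
Variable R : realType.
Lemma ReD (x y : R[i]) : Re (x + y) = Re x + Re y. Proof. by case: x; case: y. Qed.
Lemma ReN (x : R[i]) : Re (- x) = - Re x. Proof. by case: x. Qed.
Lemma ReM1 (x : R[i]) : Re (-1 * x) = - Re x. Proof. by rewrite mulN1r ReN. Qed.
Lemma Re1 (x : R[i]) : Re (1 * x) = Re x. Proof. by rewrite mul1r. Qed.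
Lemma Re_sum (T : Type) (s : seq T) (F : T -> R[i]) :
  Re (\sum_(i <- s) F i) = \sum_(i <- s) Re (F i).
Proof. elim: s => [|x s IH]; first by rewrite !big_nil. by rewrite !big_cons ReD IH. Qed.
Lemma Re_sumN1 (T : Type) (s : seq T) (F : T -> R[i]) :
  Re (\sum_(i <- s) (-1 * F i)) = - \sum_(i <- s) Re (F i).
Proof. rewrite Re_sum -sumrN; apply: eq_bigr => i _; exact: ReM1. Qed.
End ReLemmas.

Section Main.
Variables (R : realType) (L LF : nat) (hL : (0 < L)%N) (hLF : (0 < LF)%N)
  (V : lmodType R[i]) (rho : gen L LF -> V -> V) (h : gen L LF -> R[i])
  (v : V) (form : V -> V -> R[i]).
Hypotheses (Hrep : is_rep rho) (Hlw : lowest_weight h) (Hlwr : lowest_weight_rep rho h v)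
  (Hform : unitary_form rho form).

Definition f (l1 : 'I_LF) (I : word L) (l2 : 'I_LF) := Re (h (GF l1 l1 I I l2 l2)).
Definition g (l : 'I_LF) (I : word L) := Re (h (GL l l I I)).

Lemma hreal x : in_G00 x -> h x = (Re (h x))%:C.
Proof. by case: Hlw => H _ /H /RRe_real. Qed.

Lemma F1 a b (I J : word L) c d : (size J < size I)%N ->
  exists n : nat, f b J d - f a I c = n%:R.
Proof.
move=> Hs.
have nxy : (a, I, c) != (b, J, d) :> basis L LF.
  by apply/negP => /eqP [_ E _]; move: Hs; rewrite E ltnn.
pose Zh : comb L LF R[i] := [:: (1, GF b b J J d d); (-1, GF a a I I c c)].
have HZ : all (fun p => in_G00 p.2) Zh by rewrite /= !eqxx.
have Hm : in_Gminus (GF b a J I d c) by rewrite /= Hs.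
have Hmu : hhat h Zh = (f b J d - f a I c)%:C.
  have G1 : in_G00 (GF b b J J d d) by rewrite /= !eqxx.
  have G2 : in_G00 (GF a a I I c c) by rewrite /= !eqxx.
  rewrite /hhat /Zh big_cons big_cons big_nil mul1r mulN1r addr0.
  rewrite rmorphB /f; cbn [snd]. rewrite {1}(hreal _ G1) {1}(hreal _ G2). reflexivity.
have Hreal : hhat h Zh \is Num.real by rewrite Hmu; apply/complex_realP; eexists.
have Hk := @sl2_main _ _ _ _ rho h v form Hrep Hlwr Hform (GF a b I J c d)
  (GF b a J I d c) Zh erefl Hm HZ (@commF _ _ _ a b I J c d nxy)
  (@commF2 _ _ _ a b I J c d nxy) Hreal.
set r := f b J d - f a I c in Hmu *.
case: (Hk (Num.truncn (r + 1)).+1) => [[n Hn]|[_ Hle]].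
  exists n; have := congr1 (@complex.Re R) Hn; by rewrite Hmu Re_nat.
exfalso; move: Hle; rewrite Hmu -(rmorph_nat (real_complex R)) -(rmorph1 (real_complex R)).
rewrite -rmorphD lecR; apply/negP; rewrite -ltNge; exact: truncnS_gt.
Qed.

Lemma G1 l (I : word L) (i : 'I_L) : g l (rcons I i) <= g l I.
Proof.
have HZ : all (fun p => in_G00 p.2)
   ([:: (1, GL l l I I); (-1, GL l l (rcons I i) (rcons I i))] : comb L LF R[i])
  by rewrite /= !eqxx.
have Hm : in_Gminus (omega_gen (GL l l (rcons I i) I)) by rewrite /= size_rcons ltnSn.
have := @pos_lemma _ _ _ _ rho h v form Hrep Hlwr Hform (GL l l (rcons I i) I) _ Hm HZ
   (@commG _ _ _ l I i).
have G1 : in_G00 (GL l l I I) by rewrite /= !eqxx.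
have G2 : in_G00 (GL l l (rcons I i) (rcons I i)) by rewrite /= !eqxx.
rewrite /hhat big_cons big_cons big_nil mul1r mulN1r addr0; cbn [snd fst].
rewrite (hreal _ G1) (hreal _ G2) -rmorphB ler0c subr_ge0.
by [].
Qed.
Lemma G2 l (I : word L) :
  g l I = \sum_(c <- enum 'I_LF) f l I c + \sum_(i <- enum 'I_L) g l (rcons I i).
Proof.
have Hall : all (fun p => in_G00 p.2) (relcomb L LF (R[i] : numClosedFieldType) l I).
  rewrite /relcomb /= all_cat !all_map !eqxx /=.
  by apply/andP; split; apply/allP => x _ /=; rewrite !eqxx.
have H0 := (proj2 Hlw) _ Hall (@relG _ _ _ l I).
have := congr1 (@complex.Re R) H0.
rewrite /hhat /relcomb big_cons big_cat !big_map; cbn [fst snd].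
rewrite !ReD Re1 !Re_sumN1 => E.
move: E; rewrite /g /f (_ : Re 0 = 0) //; lra.
Qed.
Lemma gup l (I : word L) : g l I <= g l [::].
Proof.
elim/last_ind: I => [|I i IH] //; exact: le_trans (G1 l I i) IH.
Qed.

Let l0 : 'I_LF := Ordinal hLF.
Let i0 : 'I_L := Ordinal hL.
Let Gmax := \sum_(l <- enum 'I_LF) `|g l [::]|.
Let f0 := f l0 [::] l0.

Lemma Gpos : 0 <= Gmax.
Proof. by apply: sumr_ge0 => l _; exact: normr_ge0. Qed.

Lemma gmax l : `|g l [::]| <= Gmax.
Proof.
rewrite /Gmax (bigD1_seq l) ?mem_enum ?enum_uniq //= lerDl.
by apply: sumr_ge0 => l' _; exact: normr_ge0.
Qed.

Lemma fup l (I : word L) c : (0 < size I)%N -> f l I c <= f0.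
Proof.
move=> Hs; have [n Hn] := F1 l l0 I [::] c l0 Hs.
by rewrite -subr_ge0 /f0 Hn ler0n.
Qed.

Lemma sum_const_enum n (x : R) : \sum_(i <- enum 'I_n) x = n%:R * x.
Proof. by rewrite big_enum /= sumr_const card_ord mulr_natl. Qed.

Lemma lower l (I : word L) c : (0 < size I)%N ->
  -(L%:R * Gmax) - LF%:R * `|f0| <= f l I c.
Proof.
move=> Hs.
have E := G2 l I.
have Hs2 : \sum_(i <- enum 'I_L) g l (rcons I i) <= L%:R * g l I.
  rewrite -sum_const_enum; apply: ler_sum => i _; exact: G1.
have Hg : g l I <= Gmax.
  apply: le_trans (gup l I) _; apply: le_trans (ler_norm _) (gmax l).
have Gp := Gpos.
have HL : 1 <= L%:R :> R by rewrite ler1n.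
have S : -(L%:R * Gmax) <= \sum_(c <- enum 'I_LF) f l I c.
  rewrite (_ : \sum_(c <- enum 'I_LF) f l I c =
               g l I - \sum_(i <- enum 'I_L) g l (rcons I i)); last by rewrite E; ring.
  nra.
have T : \sum_(c' <- enum 'I_LF) (f l I c' - `|f0|) <= f l I c - `|f0|.
  rewrite (bigD1_seq c) ?mem_enum ?enum_uniq //= gerDl.
  apply: sumr_le0 => c' _; rewrite subr_le0.
  exact: le_trans (fup l I c' Hs) (ler_norm _).
rewrite sumrB sum_const_enum in T.
have := normr_ge0 f0; lra.
Qed.
Theorem main_sec : exists (alpha : R) (N : nat), forall (l1 l2 : 'I_LF) (I : seq 'I_L),
  (N <= size I)%N -> h (GF l1 l1 I I l2 l2) = alpha%:C.
Proof.
set B := -(L%:R * Gmax) - LF%:R * `|f0|.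
set f1 := f l0 [:: i0] l0.
pose P k := exists l I c, (2 <= size I)%N /\ f1 - f l I c = k%:R.
have ex : exists k, P k.
  have [n Hn] := F1 l0 l0 [:: i0; i0] [:: i0] l0 l0 (erefl _).
  by exists n, l0, [:: i0; i0], l0.
have bnd : forall k, P k -> (k <= Num.truncn (f1 - B))%N.
  move=> k [l [I [c [Hs Hk]]]].
  have Hlo := lower l I c (leq_trans (isT : (0 < 2)%N) Hs).
  have Hlt := truncnS_gt (f1 - B).
  have : k%:R < (Num.truncn (f1 - B)).+1%:R :> R.
    rewrite -Hk; apply: le_lt_trans Hlt; rewrite /B; lra.
  by rewrite ltr_nat ltnS.
have [k1 [[l1' [I1 [c1 [Hs1 Hk1]]]] Hmax]] := @nat_max P _ ex bnd.
exists (f l1' I1 c1), (size I1).+1 => l1 l2 I HN.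
have [m Hm] := F1 l1 l1' I I1 l2 c1 HN.
have Pm : P (k1 + m)%N.
  exists l1, I, l2; split; first exact: leq_trans Hs1 (ltnW HN).
  by rewrite natrD -Hk1 -Hm; ring.
have := Hmax _ Pm; rewrite -{2}(addn0 k1) leq_add2l leqn0 => /eqP m0.
move: Hm; rewrite m0 mulr0n => /eqP; rewrite subr_eq0 => /eqP Hf.
have G : in_G00 (GF l1 l1 I I l2 l2) by rewrite /= !eqxx.
rewrite (hreal _ G); congr (_%:C).
by rewrite /f in Hf; rewrite -Hf.
Qed.
End Main.

Theorem lemma21 (R : realType) (L LF : nat) (hL : (0 < L)%N) (hLF : (0 < LF)%N)
  (V : lmodType R[i]) (rho : gen L LF -> V -> V) (h : gen L LF -> R[i])
  (v : V) (form : V -> V -> R[i]) :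
  is_rep rho -> lowest_weight h -> lowest_weight_rep rho h v ->
  unitary_form rho form ->
  exists (alpha : R) (N : nat),
    forall (l1 l2 : 'I_LF) (I : seq 'I_L), (N <= size I)%N ->
      h (GF l1 l1 I I l2 l2) = alpha%:C.
Proof. move=> H1 H2 H3 H4; exact: (@main_sec R L LF hL hLF V rho h v form H1 H2 H3 H4). Qed.
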